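(* Let $A\in\mathbb{R}^{n\times m}$ have distinct columns and suppose $\mathrm{New}(A)$ is full dimensional (has nonempty interior in $\mathbb{R}^n$), every column of $A$ is either an extreme point of $\mathrm{New}(A)$ or lies in its interior, and either (1) at most one column lies in the interior of $\mathrm{New}(A)$, or (2) $\mathrm{New}(A)$ has exactly $n+1$ extreme points and at most two columns lie in its interior. Then $C_{\mathrm{SAGE}}(A)=C_{\mathrm{NNS}}(A)$.
   Context: Let $A\in\mathbb{R}^{n\times m}$ have distinct columns $a_1,\dots,a_m$. For $c\in\mathbb{R}^m$, $\mathrm{Sig}(A,c)$ denotes $x\mapsto\sum_{i=1}^m c_i\exp(a_i^\top x)$. $\mathrm{New}(A)=\mathrm{conv}\{a_1,\dots,a_m\}$. $C_{\mathrm{NNS}}(A)=\{c\in\mathbb{R}^m:\mathrm{Sig}(A,c)(x)\ge 0\ \forall x\in\mathbb{R}^n\}$, $C_{\mathrm{AGE}}(A,k)=\{c\in C_{\mathrm{NNS}}(A): c_i\ge 0\ \forall i\ne k\}$, $C_{\mathrm{SAGE}}(A)=\sum_{k=1}^m C_{\mathrm{AGE}}(A,k)$. *)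

(* Defs.v *)
From Stdlib Require Import Reals Lra.
Open Scope R_scope.

(* Points of R^n are functions nat -> R; only coordinates j < n matter.
   The matrix A in R^{n x m} is  A : nat -> nat -> R  with  A i j  the
   j-th coordinate of the i-th column a_i (i < m, j < n). *)

Fixpoint sumR (n : nat) (f : nat -> R) : R :=
  match n with O => 0 | S k => sumR k f + f k end.

Definition dot (n : nat) (a x : nat -> R) : R := sumR n (fun j => a j * x j).

Definition veq (n : nat) (y z : nat -> R) : Prop := forall j, (j < n)%nat -> y j = z j.

Definition Sig (n m : nat) (A : nat -> nat -> R) (c : nat -> R) (x : nat -> R) : R :=
  sumR m (fun i => c i * exp (dot n (A i) x)).

Definition C_NNS (n m : nat) (A : nat -> nat -> R) (c : nat -> R) : Prop :=
  forall x : nat -> R, 0 <= Sig n m A c x.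

Definition C_AGE (n m : nat) (A : nat -> nat -> R) (k : nat) (c : nat -> R) : Prop :=
  C_NNS n m A c /\ (forall i, (i < m)%nat -> i <> k -> 0 <= c i).

Definition C_SAGE (n m : nat) (A : nat -> nat -> R) (c : nat -> R) : Prop :=
  exists cs : nat -> nat -> R,
    (forall k, (k < m)%nat -> C_AGE n m A k (cs k)) /\
    (forall i, (i < m)%nat -> c i = sumR m (fun k => cs k i)).

Definition inNew (n m : nat) (A : nat -> nat -> R) (y : nat -> R) : Prop :=
  exists lam : nat -> R,
    (forall i, (i < m)%nat -> 0 <= lam i) /\ sumR m lam = 1 /\
    (forall j, (j < n)%nat -> y j = sumR m (fun i => lam i * A i j)).

Definition inInterior (n m : nat) (A : nat -> nat -> R) (y : nat -> R) : Prop :=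
  exists eps, 0 < eps /\
    forall z : nat -> R, (forall j, (j < n)%nat -> Rabs (z j - y j) < eps) ->
      inNew n m A z.

Definition full_dimensional (n m : nat) (A : nat -> nat -> R) : Prop :=
  exists y, inInterior n m A y.

Definition isExtreme (n m : nat) (A : nat -> nat -> R) (p : nat -> R) : Prop :=
  inNew n m A p /\
  forall (y z : nat -> R) (t : R),
    inNew n m A y -> inNew n m A z -> 0 < t < 1 ->
    veq n p (fun j => t * y j + (1 - t) * z j) ->
    veq n y p /\ veq n z p.

Definition distinct_columns (n m : nat) (A : nat -> nat -> R) : Prop :=
  forall i k, (i < m)%nat -> (k < m)%nat -> i <> k -> ~ veq n (A i) (A k).

Definition num_extreme_points (n m : nat) (A : nat -> nat -> R) (N : nat) : Prop :=
  exists p : nat -> (nat -> R),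
    (forall k, (k < N)%nat -> isExtreme n m A (p k)) /\
    (forall k l, (k < N)%nat -> (l < N)%nat -> k <> l -> ~ veq n (p k) (p l)) /\
    (forall y, isExtreme n m A y -> exists k, (k < N)%nat /\ veq n y (p k)).

(* Main.v *)
Require Import Defs.
From Stdlib Require Import Reals Lra Lia Classical ClassicalEpsilon Bool.
Open Scope R_scope.

Lemma sumR_ext n f g : (forall i, (i < n)%nat -> f i = g i) -> sumR n f = sumR n g.
Proof. induction n; simpl; intros H; auto. rewrite IHn by (intros; apply H; lia). rewrite H by lia. auto. Qed.

Lemma sumR_plus n f g : sumR n (fun i => f i + g i) = sumR n f + sumR n g.
Proof. induction n; simpl; [lra|]. rewrite IHn; lra. Qed.

Lemma sumR_scal n c f : sumR n (fun i => c * f i) = c * sumR n f.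
Proof. induction n; simpl; [lra|]. rewrite IHn; lra. Qed.

Lemma sumR_minus n f g : sumR n (fun i => f i - g i) = sumR n f - sumR n g.
Proof. induction n; simpl; [lra|]. rewrite IHn; lra. Qed.

Lemma sumR_zero n : sumR n (fun _ => 0) = 0.
Proof. induction n; simpl; [lra|]. rewrite IHn; lra. Qed.

Lemma sumR_const n c : sumR n (fun _ => c) = INR n * c.
Proof. induction n; simpl; [lra|]. rewrite IHn. destruct n; simpl; lra. Qed.

Lemma sumR_le n f g : (forall i, (i<n)%nat -> f i <= g i) -> sumR n f <= sumR n g.
Proof. induction n; simpl; intros H; [lra|]. assert (f n <= g n) by (apply H; lia).
  assert (sumR n f <= sumR n g) by (apply IHn; intros; apply H; lia). lra. Qed.

Lemma sumR_nonneg n f : (forall i, (i<n)%nat -> 0 <= f i) -> 0 <= sumR n f.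
Proof. intros H. rewrite <- (sumR_zero n). apply sumR_le. auto. Qed.

Lemma sumR_term_le n f k : (forall i, (i<n)%nat -> 0 <= f i) -> (k < n)%nat -> f k <= sumR n f.
Proof. induction n; simpl; intros H Hk; [lia|].
  assert (0 <= sumR n f) by (apply sumR_nonneg; intros; apply H; lia).
  destruct (Nat.eq_dec k n).
  - subst. lra.
  - assert (f k <= sumR n f) by (apply IHn; [intros; apply H; lia|lia]).
    assert (0 <= f n) by (apply H; lia). lra. Qed.

Lemma sumR_eq0 n f : (forall i, (i<n)%nat -> 0 <= f i) -> sumR n f = 0 -> forall k, (k<n)%nat -> f k = 0.
Proof. intros H Hs k Hk. assert (f k <= sumR n f) by (apply sumR_term_le; auto).
  assert (0 <= f k) by auto. lra. Qed.

Lemma sumR_swap n m F : sumR n (fun i => sumR m (fun k => F i k)) = sumR m (fun k => sumR n (fun i => F i k)).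
Proof. induction n; simpl.
  - rewrite sumR_zero. auto.
  - rewrite IHn. rewrite <- sumR_plus. auto. Qed.

Lemma sumR_single n f k : (k<n)%nat -> (forall i, (i<n)%nat -> i<>k -> f i = 0) -> sumR n f = f k.
Proof. induction n; simpl; intros Hk H; [lia|].
  destruct (Nat.eq_dec k n).
  - subst. rewrite (sumR_ext _ _ (fun _ => 0)). rewrite sumR_zero. lra.
    intros; apply H; lia.
  - rewrite IHn; [|lia|intros; apply H; lia]. rewrite (H n); [lra|lia|auto]. Qed.

Lemma sumR_split1 n f k : (k<n)%nat -> sumR n f = f k + sumR n (fun l => if (l =? k)%nat then 0 else f l).
Proof. intros Hk.
  rewrite (sumR_ext n f (fun l => (if (l =? k)%nat then f k else 0) + (if (l =? k)%nat then 0 else f l))).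
  - rewrite sumR_plus. f_equal. rewrite (sumR_single _ _ k Hk). rewrite Nat.eqb_refl; auto.
    intros i _ Hi. apply Nat.eqb_neq in Hi. rewrite Hi. auto.
  - intros i _. destruct (Nat.eqb_spec i k); subst; lra. Qed.

Definition Eb (P Q l : nat) : bool := negb (l =? P)%nat && negb (l =? Q)%nat.

Lemma EbC P Q l : Eb P Q l = Eb Q P l.
Proof. unfold Eb. apply Bool.andb_comm. Qed.

Lemma Eb_true P Q l : Eb P Q l = true <-> l <> P /\ l <> Q.
Proof. unfold Eb. destruct (Nat.eqb_spec l P); destruct (Nat.eqb_spec l Q); simpl; split; intuition; discriminate. Qed.

Lemma sumR_split2 n f P Q : (P<n)%nat -> (Q<n)%nat -> P <> Q ->
  sumR n f = f P + f Q + sumR n (fun l => if Eb P Q l then f l else 0).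
Proof. intros HP HQ HPQ.
  rewrite (sumR_split1 n f P HP). rewrite (sumR_split1 n _ Q HQ).
  rewrite (proj2 (Nat.eqb_neq Q P)) by auto. rewrite Rplus_assoc. f_equal. f_equal.
  apply sumR_ext. intros i _. unfold Eb. destruct (i =? Q)%nat; destruct (i =? P)%nat; simpl; auto. Qed.

Lemma dot_ext n a b x : veq n a b -> dot n a x = dot n b x.
Proof. intros H. unfold dot. apply sumR_ext. intros i Hi. rewrite H; auto. Qed.

Lemma dot_ext_r n a x y : veq n x y -> dot n a x = dot n a y.
Proof. intros H. unfold dot. apply sumR_ext. intros i Hi. rewrite H; auto. Qed.

Lemma dot_plus_r n a x y : dot n a (fun j => x j + y j) = dot n a x + dot n a y.
Proof. unfold dot. rewrite <- sumR_plus. apply sumR_ext. intros; ring. Qed.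

Lemma dot_scal_r n a t x : dot n a (fun j => t * x j) = t * dot n a x.
Proof. unfold dot. rewrite <- sumR_scal. apply sumR_ext. intros; ring. Qed.

Lemma dot_comb_l n m lam (A : nat -> nat -> R) x :
  dot n (fun j => sumR m (fun i => lam i * A i j)) x = sumR m (fun i => lam i * dot n (A i) x).
Proof. unfold dot. rewrite (sumR_ext n _ (fun j => sumR m (fun i => lam i * A i j * x j))).
  - rewrite sumR_swap. apply sumR_ext. intros. rewrite <- sumR_scal. apply sumR_ext. intros; ring.
  - intros. rewrite (Rmult_comm (sumR _ _)). rewrite <- sumR_scal. apply sumR_ext. intros; ring. Qed.

Lemma dot_comb_r n m W (X : nat -> nat -> R) a :
  dot n a (fun j => sumR m (fun i => W i * X i j)) = sumR m (fun i => W i * dot n a (X i)).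
Proof. unfold dot. rewrite (sumR_ext n _ (fun j => sumR m (fun i => W i * (a j * X i j)))).
  - rewrite sumR_swap. apply sumR_ext. intros. rewrite <- sumR_scal. auto.
  - intros. rewrite <- sumR_scal. apply sumR_ext. intros; ring. Qed.

Lemma affine_eval n m (A : nat -> nat -> R) lam y x k :
  sumR m lam = 1 -> (forall j, (j<n)%nat -> y j = sumR m (fun i => lam i * A i j)) ->
  dot n y x + k = sumR m (fun i => lam i * (dot n (A i) x + k)).
Proof. intros Hs Hy.
  rewrite (dot_ext n y (fun j => sumR m (fun i => lam i * A i j))) by (intros j Hj; auto).
  rewrite dot_comb_l.
  rewrite (sumR_ext m (fun i => lam i * (dot n (A i) x + k)) (fun i => lam i * dot n (A i) x + k * lam i)) by (intros; ring).
  rewrite sumR_plus, sumR_scal, Hs. ring. Qed.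

Lemma jensen m lam y : (forall i, (i<m)%nat -> 0 <= lam i) -> sumR m lam = 1 ->
  exp (sumR m (fun i => lam i * y i)) <= sumR m (fun i => lam i * exp (y i)).
Proof. intros H0 H1. set (yb := sumR m (fun i => lam i * y i)).
  assert (Hb : forall i, exp yb * (1 + (y i - yb)) <= exp (y i)).
  { intros i. replace (exp (y i)) with (exp yb * exp (y i - yb)).
    - apply Rmult_le_compat_l; [left; apply exp_pos| apply exp_ineq1_le].
    - rewrite <- exp_plus. f_equal. ring. }
  apply Rle_trans with (sumR m (fun i => lam i * (exp yb * (1 + (y i - yb))))).
  - rewrite (sumR_ext m _ (fun i => exp yb * lam i + exp yb * (lam i * y i) - (exp yb * yb) * lam i)) by (intros; ring).
    rewrite sumR_minus, sumR_plus, !sumR_scal, H1. fold yb. lra.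
  - apply sumR_le. intros. apply Rmult_le_compat_l; auto. Qed.

Lemma sumsq_pos n x : (exists j, (j<n)%nat /\ x j <> 0) -> 0 < dot n x x.
Proof. intros [j [Hj Hx]]. unfold dot.
  apply Rlt_le_trans with (x j * x j). { assert (0 < x j * x j) by nra. lra. }
  apply (sumR_term_le n (fun j => x j * x j)); auto. intros; nra. Qed.

Lemma sumsq_zero n x : dot n x x = 0 -> forall j, (j<n)%nat -> x j = 0.
Proof. intros H j Hj. destruct (Req_dec (x j) 0); auto.
  assert (0 < dot n x x) by (apply sumsq_pos; eauto). lra. Qed.

Lemma small_pert r (keep : nat -> bool) (a b : nat -> R) :
  (forall l, (l<r)%nat -> keep l = true -> 0 < a l) ->
  exists eta, 0 < eta /\ forall e, 0 < e <= eta -> forall l, (l<r)%nat -> keep l = true -> 0 < a l + e * b l.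
Proof. induction r; intros H.
  - exists 1. split; [lra|]. intros; lia.
  - destruct IHr as [eta0 [He0 Hr]]. { intros; apply H; auto; lia. }
    destruct (keep r) eqn:Kr.
    + assert (Har : 0 < a r) by (apply H; auto).
      assert (Hq : 0 < a r / (Rabs (b r) + 1)).
      { apply Rdiv_lt_0_compat; auto. pose proof (Rabs_pos (b r)); lra. }
      exists (Rmin eta0 (a r / (Rabs (b r) + 1))). split.
      * apply Rmin_Rgt_r; auto.
      * intros e [He1 He2] l Hl Kl. destruct (Nat.eq_dec l r).
        -- subst. pose proof (Rmin_r eta0 (a r / (Rabs (b r) + 1))).
           assert (e <= a r / (Rabs (b r) + 1)) by lra.
           pose proof (Rabs_pos (b r)).
           assert (e * (Rabs (b r) + 1) <= a r).
           { apply (Rmult_le_compat_r (Rabs (b r) + 1)) in H1; [|lra].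
             unfold Rdiv in H1. rewrite Rmult_assoc, Rinv_l in H1 by lra. lra. }
           assert (- Rabs (b r) <= b r) by (pose proof (Rle_abs (- b r)); rewrite Rabs_Ropp in H4; lra).
           nra.
        -- apply Hr; auto; [|lia]. split; auto. pose proof (Rmin_l eta0 (a r / (Rabs (b r) + 1))). lra.
    + exists eta0. split; auto. intros e He l Hl Kl. destruct (Nat.eq_dec l r).
      * subst. congruence.
      * apply Hr; auto; lia. Qed.

Lemma gordan n : forall r (keep : nat -> bool) (w : nat -> nat -> R),
  (exists v, forall l, (l<r)%nat -> keep l = true -> 0 < dot n (w l) v) \/
  (exists b, (forall l, (l<r)%nat -> 0 <= b l) /\ (forall l, (l<r)%nat -> keep l = false -> b l = 0) /\
     sumR r b = 1 /\ forall j, (j<n)%nat -> sumR r (fun l => b l * w l j) = 0).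
Proof. induction r; intros keep w.
  - left. exists (fun _ => 0). intros; lia.
  -
    assert (Hext : (exists b, (forall l, (l<r)%nat -> 0 <= b l) /\ (forall l, (l<r)%nat -> keep l = false -> b l = 0) /\
     sumR r b = 1 /\ forall j, (j<n)%nat -> sumR r (fun l => b l * w l j) = 0) ->
      (exists b, (forall l, (l<S r)%nat -> 0 <= b l) /\ (forall l, (l<S r)%nat -> keep l = false -> b l = 0) /\
     sumR (S r) b = 1 /\ forall j, (j<n)%nat -> sumR (S r) (fun l => b l * w l j) = 0)).
    { intros [b [B0 [B1 [B2 B3]]]]. exists (fun l => if (l <? r)%nat then b l else 0).
      split; [|split; [|split]].
      - intros l Hl. destruct (Nat.ltb_spec l r); [apply B0; auto|lra].
      - intros l Hl K. destruct (Nat.ltb_spec l r); [apply B1; auto|lra].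
      - simpl. rewrite Nat.ltb_irrefl. rewrite Rplus_0_r. rewrite <- B2. apply sumR_ext.
        intros i Hi. apply Nat.ltb_lt in Hi. rewrite Hi. auto.
      - intros j Hj. simpl. rewrite Nat.ltb_irrefl. rewrite Rmult_0_l, Rplus_0_r.
        transitivity (sumR r (fun l => b l * w l j)); [|apply B3; auto]. apply sumR_ext. intros i Hi. apply Nat.ltb_lt in Hi. rewrite Hi. auto. }
    destruct (keep r) eqn:Kr.
    + destruct (classic (forall j, (j<n)%nat -> w r j = 0)) as [Z|NZ].
      * right. exists (fun l => if (l =? r)%nat then 1 else 0). split; [|split; [|split]].
        -- intros l _. destruct (l =? r)%nat; lra.
        -- intros l Hl K. destruct (Nat.eqb_spec l r); [subst; congruence|auto].
        -- rewrite (sumR_single _ _ r); [rewrite Nat.eqb_refl; auto|lia|].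
           intros i _ Hi. apply Nat.eqb_neq in Hi. rewrite Hi. auto.
        -- intros j Hj. rewrite (sumR_single _ _ r); [rewrite Nat.eqb_refl; rewrite Z; auto; ring|lia|].
           intros i _ Hi. apply Nat.eqb_neq in Hi. rewrite Hi. ring.
      * assert (NZ' : exists j, (j<n)%nat /\ w r j <> 0).
        { apply NNPP. intros C. apply NZ. intros j Hj. apply NNPP. intros C2. apply C. eauto. }
        destruct (IHr keep w) as [[v Hv]|Hb]; [|right; apply Hext; auto].
        set (al := dot n (w r) v).
        destruct (Rlt_dec 0 al) as [Hal|Hal].
        { left. exists v. intros l Hl K. destruct (Nat.eq_dec l r); [subst; auto|apply Hv; auto; lia]. }
        set (y := fun l j => dot n (w l) v * w r j - al * w l j).
        destruct (IHr keep y) as [[v' Hv']|[b [B0 [B1 [B2 B3]]]]].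
        -- destruct (small_pert r keep (fun l => dot n (y l) v') (fun l => dot n (w l) (w r)) Hv') as [eta [He Hp]].
           left. exists (fun j => (- al) * v' j + dot n (w r) v' * v j + eta * w r j).
           intros l Hl K.
           rewrite !dot_plus_r, !dot_scal_r.
           destruct (Nat.eq_dec l r).
           ++ subst. assert (0 < dot n (w r) (w r)) by (apply sumsq_pos; auto). fold al.
              assert (0 < eta * dot n (w r) (w r)) by (apply Rmult_lt_0_compat; auto). nra.
           ++ assert (Hl' : (l < r)%nat) by lia.
              specialize (Hp eta (conj He (Rle_refl _)) l Hl' K). simpl in Hp.
              assert (dot n (y l) v' = dot n (w l) v * dot n (w r) v' - al * dot n (w l) v').
              { unfold y. unfold dot. rewrite <- sumR_scal, <- sumR_scal, <- sumR_minus. apply sumR_ext. intros; ring. }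
              rewrite H in Hp. lra.
        -- right. set (g := fun l => dot n (w l) v).
           set (S := sumR r (fun l => b l * g l)).
           assert (HS : 0 < S).
           { assert (Hnn : forall l, (l<r)%nat -> 0 <= b l * g l).
             { intros l Hl. destruct (keep l) eqn:Kl.
               - apply Rmult_le_pos; auto. left. apply Hv; auto.
               - rewrite B1; auto. lra. }
             destruct (Rle_lt_or_eq_dec 0 S) as [|HS0]; [apply sumR_nonneg; auto|auto|].
             exfalso. assert (forall l, (l<r)%nat -> b l = 0).
             { intros l Hl. destruct (keep l) eqn:Kl; [|apply B1; auto].
               pose proof (sumR_eq0 r _ Hnn (eq_sym HS0) l Hl). simpl in H.
               assert (0 < g l) by (apply Hv; auto). nra. }
             rewrite (sumR_ext _ _ (fun _ => 0)) in B2 by auto. rewrite sumR_zero in B2. lra. }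
           assert (HT : 0 < S - al) by lra.
           exists (fun l => if (l <? r)%nat then - al * b l / (S - al) else S / (S - al)).
           split; [|split; [|split]].
           ++ intros l Hl. destruct (Nat.ltb_spec l r).
              ** apply Rmult_le_pos; [|left; apply Rinv_0_lt_compat; auto]. assert (0 <= b l) by auto. nra.
              ** left. apply Rdiv_lt_0_compat; auto.
           ++ intros l Hl K. destruct (Nat.ltb_spec l r).
              ** rewrite B1; auto. unfold Rdiv. ring.
              ** assert (l = r) by lia. subst. congruence.
           ++ simpl. rewrite Nat.ltb_irrefl.
              rewrite (sumR_ext _ _ (fun l => (- al / (S - al)) * b l)).
              ** rewrite sumR_scal, B2. field. lra.
              ** intros i Hi. apply Nat.ltb_lt in Hi. rewrite Hi. unfold Rdiv. ring.
           ++ intros j Hj. simpl. rewrite Nat.ltb_irrefl.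
              specialize (B3 j Hj).
              assert (sumR r (fun l => b l * y l j) = S * w r j - al * sumR r (fun l => b l * w l j)).
              { unfold y, S, g. rewrite <- sumR_scal. rewrite (Rmult_comm _ (w r j)). rewrite <- sumR_scal.
                rewrite <- sumR_minus. apply sumR_ext. intros; ring. }
              rewrite (sumR_ext _ _ (fun l => (- al / (S - al)) * (b l * w l j))).
              ** rewrite sumR_scal. rewrite B3 in H.
                 assert (S * w r j = al * sumR r (fun l => b l * w l j)) by lra.
                 transitivity ((- al * sumR r (fun l => b l * w l j) + S * w r j) / (S - al)); [field; lra|].
                 rewrite H0. unfold Rdiv. ring.
              ** intros i Hi. apply Nat.ltb_lt in Hi. rewrite Hi. unfold Rdiv. ring.
    + destruct (IHr keep w) as [[v Hv]|Hb]; [left|right; apply Hext; auto].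
      exists v. intros l Hl K. destruct (Nat.eq_dec l r); [subst; congruence|apply Hv; auto; lia].
Qed.

Lemma sumR_delta m k a f : (k<m)%nat -> sumR m (fun l => (if (l =? k)%nat then a else 0) * f l) = a * f k.
Proof. intros Hk. rewrite (sumR_single _ _ k Hk). rewrite Nat.eqb_refl; auto.
  intros i _ Hi. apply Nat.eqb_neq in Hi. rewrite Hi. ring. Qed.

Lemma sumR_delta0 m k a : (k<m)%nat -> sumR m (fun l => if (l =? k)%nat then a else 0) = a.
Proof. intros Hk. rewrite (sumR_single _ _ k Hk). rewrite Nat.eqb_refl; auto.
  intros i _ Hi. apply Nat.eqb_neq in Hi. rewrite Hi. auto. Qed.

Lemma col_inNew n m A k : (k<m)%nat -> inNew n m A (A k).
Proof. intros Hk. exists (fun l => if (l =? k)%nat then 1 else 0). split; [|split].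
  - intros l _. destruct (l =? k)%nat; lra.
  - apply sumR_delta0; auto.
  - intros j Hj. rewrite sumR_delta; auto. ring. Qed.

Lemma ext_comb n m A p b l0 : isExtreme n m A p -> (forall l, (l<m)%nat -> 0 <= b l) -> sumR m b = 1 ->
  (forall j, (j<n)%nat -> p j = sumR m (fun l => b l * A l j)) -> (l0 < m)%nat -> 0 < b l0 -> veq n (A l0) p.
Proof. intros [Hin Hex] B0 B1 Hp Hl0 Hb.
  assert (Hb1 : b l0 <= 1) by (rewrite <- B1; apply sumR_term_le; auto).
  set (t := b l0 / 2).
  set (b' := fun l => (b l - (if (l =? l0)%nat then t else 0)) / (1 - t)).
  assert (Ht : 0 < t < 1) by (unfold t; lra).
  assert (Hsum : forall f, (1 - t) * sumR m (fun l => b' l * f l) = sumR m (fun l => b l * f l) - t * f l0).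
  { intros f. rewrite <- sumR_scal. rewrite <- (sumR_delta m l0 t f) by auto. rewrite <- sumR_minus.
    apply sumR_ext. intros. unfold b'. field. lra. }
  destruct (Hex (A l0) (fun j => sumR m (fun l => b' l * A l j)) t) as [H1 _]; auto.
  - apply col_inNew; auto.
  - exists b'. split; [|split].
    + intros l Hl. unfold b'. apply Rmult_le_pos; [|left; apply Rinv_0_lt_compat; lra].
      destruct (Nat.eqb_spec l l0); [subst; unfold t; lra|]. rewrite Rminus_0_r; auto.
    + apply (Rmult_eq_reg_l (1 - t)); [|lra].
      pose proof (Hsum (fun _ => 1)). simpl in H.
      rewrite (sumR_ext m b' (fun l => b' l * 1)) by (intros; ring).
      rewrite H. rewrite (sumR_ext m _ b) by (intros; ring). rewrite B1. ring.
    + intros; reflexivity.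
  - intros j Hj. simpl. rewrite (Hsum (fun l => A l j)). rewrite <- Hp; auto. ring. Qed.

Lemma exp_big_bound d : 0 < d -> forall K, 0 < K -> forall t, 0 <= t -> t * d >= 1/K -> exp (- (t * d)) <= K.
Proof. intros Hd K HK t Ht Htd.
  rewrite exp_Ropp. assert (1 + t * d <= exp (t * d)) by apply exp_ineq1_le.
  assert (0 < exp (t * d)) by apply exp_pos.
  apply (Rmult_le_reg_r (exp (t*d))); auto. rewrite Rinv_l by lra.
  assert (1/K * K = 1) by (field; lra).
  assert (1 <= t * d * K). { apply Rge_le in Htd. apply (Rmult_le_compat_r K) in Htd; lra. }
  nra. Qed.

Lemma ext_coef_nonneg n m A c i : distinct_columns n m A -> (i<m)%nat -> isExtreme n m A (A i) ->
  C_NNS n m A c -> 0 <= c i.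
Proof. intros Hd Hi Hex Hnn. apply Rnot_lt_le. intros Hc.
  destruct (gordan n m (fun l => negb (l =? i)%nat) (fun l j => A i j - A l j)) as [[v Hv]|[b [B0 [B1 [B2 B3]]]]].
  - set (g := fun l => dot n (A l) v).
    set (del := fun l => g i - g l).
    assert (Hdel : forall l, (l<m)%nat -> l <> i -> 0 < del l).
    { intros l Hl Hli. specialize (Hv l Hl). apply Nat.eqb_neq in Hli. rewrite Hli in Hv. simpl in Hv.
      specialize (Hv eq_refl). unfold del, g. unfold dot in *. rewrite <- sumR_minus.
      rewrite (sumR_ext _ _ (fun j => (A i j - A l j) * v j)); auto. intros; ring. }
    set (K := - c i / (2 * INR m)).
    assert (Hm : 0 < INR m) by (apply lt_0_INR; lia).
    assert (HK : 0 < K) by (unfold K; apply Rdiv_lt_0_compat; lra).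
    set (Kl := fun l => K / (Rabs (c l) + 1)).
    assert (HKl : forall l, 0 < Kl l) by (intros; unfold Kl; apply Rdiv_lt_0_compat; [lra|pose proof (Rabs_pos (c l)); lra]).
    set (tt := sumR m (fun l => if (l =? i)%nat then 0 else (1 / Kl l) / del l)).
    assert (Htt : forall l, (l<m)%nat -> l <> i -> tt * del l >= 1 / Kl l).
    { intros l Hl Hli. apply Rle_ge.
      assert ((1/Kl l)/del l <= tt).
      { pose proof (sumR_term_le m (fun l => if (l =? i)%nat then 0 else (1 / Kl l) / del l) l) as HH.
        cbv beta in HH. rewrite (proj2 (Nat.eqb_neq _ _) Hli) in HH. apply HH; auto.
        intros l' Hl'. destruct (Nat.eqb_spec l' i); [lra|].
        left. apply Rdiv_lt_0_compat; [apply Rdiv_lt_0_compat; [lra|auto]|apply Hdel; auto]. }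
      specialize (Hdel l Hl Hli). apply (Rmult_le_compat_r (del l)) in H; [|lra].
      unfold Rdiv in H at 1. rewrite Rmult_assoc, Rinv_l in H by lra. lra. }
    assert (Htt0 : 0 <= tt).
    { unfold tt. apply sumR_nonneg. intros l Hl. destruct (Nat.eqb_spec l i); [lra|].
      left. apply Rdiv_lt_0_compat; [apply Rdiv_lt_0_compat; [lra|auto]|apply Hdel; auto]. }
    specialize (Hnn (fun j => tt * v j)). unfold Sig in Hnn.
    rewrite (sumR_ext _ _ (fun l => exp (tt * g i) * (c l * exp (- (tt * del l))))) in Hnn.
    2:{ intros l Hl. rewrite dot_scal_r. fold (g l).
        rewrite <- Rmult_assoc, (Rmult_comm (exp _) (c l)), Rmult_assoc, <- exp_plus. f_equal. f_equal. unfold del. ring. }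
    rewrite sumR_scal in Hnn.
    assert (sumR m (fun l => c l * exp (- (tt * del l))) <= sumR m (fun l => (if (l =? i)%nat then c i else 0) + K)).
    { apply sumR_le. intros l Hl. destruct (Nat.eqb_spec l i).
      - subst. unfold del. rewrite Rminus_diag, Rmult_0_r, Ropp_0, exp_0. lra.
      - assert (exp (- (tt * del l)) <= Kl l) by (apply exp_big_bound; auto).
        assert (c l * exp (- (tt * del l)) <= Rabs (c l) * exp (- (tt * del l))).
        { apply Rmult_le_compat_r; [left; apply exp_pos|apply Rle_abs]. }
        assert (Rabs (c l) * exp (- (tt * del l)) <= Rabs (c l) * Kl l).
        { apply Rmult_le_compat_l; [apply Rabs_pos|auto]. }
        assert (Rabs (c l) * Kl l <= K).
        { unfold Kl. pose proof (Rabs_pos (c l)). apply (Rmult_le_reg_r (Rabs (c l) + 1)); [lra|].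
          unfold Rdiv. rewrite Rmult_assoc, (Rmult_assoc K), Rinv_l by lra. nra. }
        lra. }
    rewrite sumR_plus, sumR_delta0, sumR_const in H by auto.
    assert (INR m * K = - c i / 2) by (unfold K; field; lra).
    assert (0 < exp (tt * g i)) by apply exp_pos. nra.
  - assert (Hl0 : exists l0, (l0 < m)%nat /\ 0 < b l0).
    { apply NNPP. intros C. assert (forall l, (l<m)%nat -> b l = 0).
      { intros l Hl. apply Rle_antisym; [|auto]. apply Rnot_lt_le. intros Hp. apply C; eauto. }
      rewrite (sumR_ext _ _ (fun _ => 0)) in B2 by auto. rewrite sumR_zero in B2. lra. }
    destruct Hl0 as [l0 [Hl0 Hb0]].
    assert (l0 <> i). { intros ->. rewrite B1 in Hb0; auto; [lra|]. rewrite Nat.eqb_refl; auto. }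
    apply (Hd l0 i); auto.
    apply (ext_comb n m A (A i) b l0); auto.
    intros j Hj. specialize (B3 j Hj).
    rewrite (sumR_ext _ _ (fun l => A i j * b l - b l * A l j)) in B3 by (intros; ring).
    rewrite sumR_minus, sumR_scal, B2 in B3. lra.
Qed.

Lemma sage_nns n m A c : C_SAGE n m A c -> C_NNS n m A c.
Proof. intros [cs [Hage Hsum]] x. unfold Sig.
  rewrite (sumR_ext _ _ (fun i => sumR m (fun k => cs k i * exp (dot n (A i) x)))).
  - rewrite sumR_swap. apply sumR_nonneg. intros k Hk. destruct (Hage k Hk) as [H _]. apply H.
  - intros i Hi. rewrite Hsum by auto. rewrite Rmult_comm, <- sumR_scal. apply sumR_ext. intros; ring. Qed.

Lemma zero_NNS n m A : C_NNS n m A (fun _ => 0).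
Proof. intros x. unfold Sig. rewrite (sumR_ext _ _ (fun _ => 0)) by (intros; ring). rewrite sumR_zero; lra. Qed.

Lemma age_sage n m A c k : (k<m)%nat -> C_AGE n m A k c -> C_SAGE n m A c.
Proof. intros Hk Hage. exists (fun k' => if (k' =? k)%nat then c else (fun _ => 0)). split.
  - intros k' Hk'. destruct (Nat.eqb_spec k' k); [subst; auto|].
    split; [apply zero_NNS|intros; lra].
  - intros i Hi. rewrite (sumR_single _ _ k Hk); [rewrite Nat.eqb_refl; auto|].
    intros k' _ Hk'. apply Nat.eqb_neq in Hk'. rewrite Hk'. auto. Qed.

Lemma one_neg n m A c : C_NNS n m A c ->
  (forall i j, (i<m)%nat -> (j<m)%nat -> c i < 0 -> c j < 0 -> i = j) -> C_SAGE n m A c.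
Proof. intros Hnn Hone. destruct m as [|m'].
  - exists (fun _ _ => 0). split; intros; lia.
  - destruct (classic (exists k, (k < S m')%nat /\ c k < 0)) as [[k [Hk Hck]]|Hno].
    + apply (age_sage _ _ _ _ k Hk). split; auto. intros i Hi Hik.
      apply Rnot_lt_le. intros Hci. apply Hik. eapply Hone; eauto.
    + apply (age_sage _ _ _ _ 0%nat); [lia|]. split; auto. intros i Hi _.
      apply Rnot_lt_le. intros Hci. apply Hno. eauto. Qed.

Definition convS n m (A : nat -> nat -> R) (S : nat -> bool) (y : nat -> R) := exists lam,
  (forall i, (i<m)%nat -> 0 <= lam i) /\ (forall i, (i<m)%nat -> S i = false -> lam i = 0) /\
  sumR m lam = 1 /\ forall j, (j<n)%nat -> y j = sumR m (fun i => lam i * A i j).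

Lemma sumR_del m f j : (j<m)%nat -> sumR m (fun l => if (l =? j)%nat then 0 else f l) = sumR m f - f j.
Proof. intros Hj. rewrite (sumR_split1 m f j Hj). ring. Qed.

Lemma conc_one n m (A : nat -> nat -> R) al y j : (forall l, (l<m)%nat -> 0 <= al l) -> sumR m al = 1 -> al j = 1 -> (j<m)%nat ->
  (forall k, (k<n)%nat -> y k = sumR m (fun l => al l * A l k)) -> veq n y (A j).
Proof. intros H0 H1 Hj Hjm Hy k Hk. rewrite Hy by auto.
  assert (Hz : forall l, (l<m)%nat -> l <> j -> al l = 0).
  { intros l Hl Hlj. pose proof (sumR_del m al j Hjm).
    assert (Hnn : forall l', (l'<m)%nat -> 0 <= (fun l => if (l =? j)%nat then 0 else al l) l').
    { intros l' Hl'. simpl. destruct (l' =? j)%nat; [lra|auto]. }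
    assert (Hs0 : sumR m (fun l => if (l =? j)%nat then 0 else al l) = 0) by (rewrite H; lra).
    pose proof (sumR_eq0 m _ Hnn Hs0 l Hl) as H2. simpl in H2.
    rewrite (proj2 (Nat.eqb_neq _ _) Hlj) in H2. auto. }
  rewrite (sumR_single _ _ j Hjm). rewrite Hj; ring.
  intros l Hl Hlj. rewrite Hz; auto; ring. Qed.

Lemma elim_nonext n m A S j : (forall y, inNew n m A y -> convS n m A S y) -> (j<m)%nat ->
  ~ isExtreme n m A (A j) -> forall y, inNew n m A y -> convS n m A (fun l => S l && negb (l =? j)%nat) y.
Proof. intros HS Hjm Hne.
  assert (Hx : exists y1 z1 t, inNew n m A y1 /\ inNew n m A z1 /\ 0 < t < 1 /\
     veq n (A j) (fun k => t * y1 k + (1 - t) * z1 k) /\ ~ (veq n y1 (A j) /\ veq n z1 (A j))).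
  { apply NNPP. intros C. apply Hne. split; [apply col_inNew; auto|].
    intros y z t Hy Hz Ht Hv. apply NNPP. intros C2. apply C. exists y, z, t. auto. }
  destruct Hx as [y1 [z1 [t [Hy1 [Hz1 [Ht [Hv Hnot]]]]]]].
  destruct (HS y1 Hy1) as [al [A0 [A1 [A2 A3]]]].
  destruct (HS z1 Hz1) as [be [B0 [B1 [B2 B3]]]].
  set (ga := fun l => t * al l + (1 - t) * be l).
  assert (Hga1 : ga j < 1).
  { assert (al j <= 1) by (rewrite <- A2; apply sumR_term_le; auto).
    assert (be j <= 1) by (rewrite <- B2; apply sumR_term_le; auto).
    apply Rnot_le_lt. intros C. unfold ga in C.
    assert (al j = 1) by nra. assert (be j = 1) by nra.
    apply Hnot. split; [apply (conc_one n m A al y1 j)|apply (conc_one n m A be z1 j)]; auto. }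
  assert (Hgas : sumR m ga = 1).
  { unfold ga. rewrite sumR_plus, !sumR_scal, A2, B2. ring. }
  assert (Hga0 : forall l, (l<m)%nat -> 0 <= ga l).
  { intros l Hl. unfold ga. assert (0 <= al l) by auto. assert (0 <= be l) by auto. nra. }
  assert (HgaS : forall l, (l<m)%nat -> S l = false -> ga l = 0).
  { intros l Hl Hs. unfold ga. rewrite A1, B1 by auto. ring. }
  assert (Hgarep : forall k, (k<n)%nat -> A j k = sumR m (fun l => ga l * A l k)).
  { intros k Hk. rewrite Hv by auto. rewrite A3, B3 by auto. unfold ga.
    rewrite <- !sumR_scal, <- sumR_plus. apply sumR_ext. intros; ring. }
  set (gp := fun l => (if (l =? j)%nat then 0 else ga l) / (1 - ga j)).
  assert (Hgp0 : forall l, (l<m)%nat -> 0 <= gp l).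
  { intros l Hl. unfold gp. apply Rmult_le_pos; [|left; apply Rinv_0_lt_compat; lra].
    destruct (l =? j)%nat; [lra|auto]. }
  assert (Hgps : sumR m gp = 1).
  { unfold gp. rewrite (sumR_ext _ _ (fun l => / (1 - ga j) * (if (l =? j)%nat then 0 else ga l))) by (intros; unfold Rdiv; ring).
    rewrite sumR_scal, sumR_del, Hgas by auto. field. lra. }
  assert (Hgprep : forall k, (k<n)%nat -> A j k = sumR m (fun l => gp l * A l k)).
  { intros k Hk. unfold gp.
    rewrite (sumR_ext _ _ (fun l => / (1 - ga j) * (if (l =? j)%nat then 0 else ga l * A l k))).
    2:{ intros l _. destruct (l =? j)%nat; unfold Rdiv; ring. }
    rewrite sumR_scal, (sumR_del m (fun l => ga l * A l k)), <- Hgarep by auto. field. lra. }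
  intros y Hy. destruct (HS y Hy) as [nu [N0 [N1 [N2 N3]]]].
  exists (fun l => (if (l =? j)%nat then 0 else nu l) + nu j * gp l). split; [|split; [|split]].
  - intros l Hl. assert (0 <= nu j) by auto. assert (0 <= gp l) by auto.
    destruct (l =? j)%nat; [nra|]. assert (0 <= nu l) by auto. nra.
  - intros l Hl Hs. destruct (Nat.eqb_spec l j).
    + subst. unfold gp. rewrite Nat.eqb_refl. unfold Rdiv. ring.
    + rewrite andb_true_r in Hs. rewrite N1 by auto. unfold gp. rewrite (proj2 (Nat.eqb_neq _ _) n0).
      rewrite HgaS by auto. unfold Rdiv. ring.
  - rewrite sumR_plus, sumR_scal, sumR_del, Hgps, N2 by auto. ring.
  - intros k Hk. rewrite (sumR_ext _ _ (fun l => (if (l =? j)%nat then 0 else nu l * A l k) + nu j * (gp l * A l k))).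
    2:{ intros l _. destruct (l =? j)%nat; ring. }
    rewrite sumR_plus, sumR_scal, (sumR_del m (fun l => nu l * A l k)), <- Hgprep, <- N3 by auto. ring.
Qed.

Lemma interior_not_extreme n m A y : (1 <= n)%nat -> inInterior n m A y -> ~ isExtreme n m A y.
Proof. intros Hn [eps [He Hball]] [Hin Hex].
  set (e0 := fun j : nat => if (j =? 0)%nat then 1 else 0).
  assert (Hb : forall s, Rabs s < 1 -> inNew n m A (fun j => y j + s * (eps/2) * e0 j)).
  { intros s Hs. apply Hball. intros j Hj. replace (y j + s * (eps / 2) * e0 j - y j) with (s * (eps/2) * e0 j) by ring.
    rewrite !Rabs_mult. unfold e0. assert (Rabs (eps/2) = eps/2) by (apply Rabs_right; lra).
    rewrite H. destruct (j =? 0)%nat; [rewrite Rabs_R1|rewrite Rabs_R0]; nra. }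
  destruct (Hex (fun j => y j + 1/2 * (eps/2) * e0 j) (fun j => y j + (-1/2) * (eps/2) * e0 j) (1/2)) as [H1 _].
  - apply Hb. rewrite Rabs_right; lra.
  - apply Hb. rewrite Rabs_left; lra.
  - lra.
  - intros j Hj. cbv beta. field.
  - specialize (H1 0%nat ltac:(lia)). simpl in H1. unfold e0 in H1. simpl in H1. lra. Qed.

Definition skip (k t : nat) : nat := if (t <? k)%nat then t else S t.
Definition unskip (k j : nat) : nat := if (j <? k)%nat then j else (j - 1)%nat.

Lemma skip_neq k t : skip k t <> k.
Proof. unfold skip. destruct (Nat.ltb_spec t k); lia. Qed.
Lemma unskip_skip k t : unskip k (skip k t) = t.
Proof. unfold skip, unskip. destruct (Nat.ltb_spec t k).
  - rewrite (proj2 (Nat.ltb_lt _ _)) by lia. auto.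
  - rewrite (proj2 (Nat.ltb_ge _ _)) by lia. lia. Qed.
Lemma skip_lt k t N : (k < N)%nat -> (t < N - 1)%nat -> (skip k t < N)%nat.
Proof. unfold skip. destruct (Nat.ltb_spec t k); lia. Qed.
Lemma skip_surj k j N : (k < N)%nat -> (j < N)%nat -> j <> k -> (unskip k j < N - 1)%nat /\ skip k (unskip k j) = j.
Proof. intros. unfold skip, unskip. destruct (Nat.ltb_spec j k).
  - rewrite (proj2 (Nat.ltb_lt _ _)) by lia. split; [lia|auto].
  - rewrite (proj2 (Nat.ltb_ge _ _)) by lia. split; lia. Qed.

Lemma sumR_skip N f k : (k < N)%nat -> sumR N f = f k + sumR (N-1) (fun t => f (skip k t)).
Proof. revert k. induction N; intros k Hk; [lia|].
  replace (S N - 1)%nat with N by lia. simpl.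
  destruct (Nat.eq_dec k N).
  - subst. rewrite (sumR_ext N (fun t => f (skip N t)) f). lra.
    intros i Hi. unfold skip. rewrite (proj2 (Nat.ltb_lt _ _)) by lia. auto.
  - rewrite (IHN k) by lia. destruct N; [lia|]. replace (S N - 1)%nat with N by lia. simpl.
    unfold skip at 3. rewrite (proj2 (Nat.ltb_ge N k)) by lia. ring. Qed.

Lemma homog : forall r N (V : nat -> nat -> R), (r < N)%nat ->
  exists z, (exists j, (j<N)%nat /\ z j <> 0) /\ forall t, (t<r)%nat -> sumR N (fun j => V t j * z j) = 0.
Proof. induction r; intros N V HN.
  - exists (fun _ => 1). split; [exists 0%nat; split; [lia|lra]|intros; lia].
  - destruct (classic (forall j, (j<N)%nat -> V r j = 0)) as [Z|NZ].
    + destruct (IHr N V ltac:(lia)) as [z [Hz1 Hz2]]. exists z. split; auto.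
      intros t Ht. destruct (Nat.eq_dec t r); [|apply Hz2; lia]. subst.
      rewrite (sumR_ext _ _ (fun _ => 0)); [apply sumR_zero|]. intros j Hj. rewrite Z; auto; ring.
    + assert (Hj0 : exists j0, (j0<N)%nat /\ V r j0 <> 0).
      { apply NNPP. intros C. apply NZ. intros j Hj. apply NNPP. intros C2. apply C. eauto. }
      destruct Hj0 as [j0 [Hj0 Hp]]. set (p := V r j0) in *.
      set (W := fun t j => V t j - V t j0 / p * V r j).
      destruct (IHr (N-1)%nat (fun t j => W t (skip j0 j)) ltac:(lia)) as [z' [[j1 [Hj1 Hz1]] Hz2]].
      set (Sr := sumR (N-1) (fun j' => V r (skip j0 j') * z' j')).
      exists (fun j => if (j =? j0)%nat then - Sr / p else z' (unskip j0 j)).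
      assert (Hzs : forall j', (if (skip j0 j' =? j0)%nat then - Sr / p else z' (unskip j0 (skip j0 j'))) = z' j').
      { intros j'. rewrite (proj2 (Nat.eqb_neq _ _) (skip_neq j0 j')). apply f_equal. apply unskip_skip. }
      split.
      * exists (skip j0 j1). split; [apply skip_lt; auto|]. rewrite Hzs. auto.
      * intros t Ht. rewrite (sumR_skip N _ j0 Hj0). cbv beta. rewrite Nat.eqb_refl.
        rewrite (sumR_ext (N-1) _ (fun j' => V t (skip j0 j') * z' j')) by (intros; rewrite Hzs; auto).
        destruct (Nat.eq_dec t r).
        -- subst. fold Sr. fold p. field. auto.
        -- specialize (Hz2 t ltac:(lia)). unfold W in Hz2.
           rewrite (sumR_ext _ _ (fun j' => V t (skip j0 j') * z' j' - V t j0 / p * (V r (skip j0 j') * z' j'))) in Hz2 by (intros; ring).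
           rewrite sumR_minus, sumR_scal in Hz2. fold Sr in Hz2.
           assert (sumR (N - 1) (fun j' => V t (skip j0 j') * z' j') = V t j0 / p * Sr) by lra.
           rewrite H. field. auto. Qed.

Definition Setting n m A P Q : Prop :=
  (P < m)%nat /\ (Q < m)%nat /\ P <> Q /\ distinct_columns n m A /\ inInterior n m A (A P) /\
  inInterior n m A (A Q) /\ (forall l, (l<m)%nat -> l <> P -> l <> Q -> isExtreme n m A (A l)) /\
  num_extreme_points n m A (S n) /\ (1 <= n)%nat.

Lemma convE n m A P Q : Setting n m A P Q -> forall y, inNew n m A y -> convS n m A (Eb P Q) y.
Proof. intros [HP [HQ [HPQ [Hd [HiP [HiQ [Hext [Hnum Hn]]]]]]]].
  assert (H0 : forall y, inNew n m A y -> convS n m A (fun _ => true) y).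
  { intros y [lam [L0 [L1 L2]]]. exists lam. repeat split; auto. intros; discriminate. }
  pose proof (elim_nonext n m A (fun _ => true) P H0 HP (interior_not_extreme n m A _ Hn HiP)) as H1.
  pose proof (elim_nonext n m A _ Q H1 HQ (interior_not_extreme n m A _ Hn HiQ)) as H2.
  exact H2. Qed.

Lemma dot_plus_l n a b x : dot n (fun j => a j + b j) x = dot n a x + dot n b x.
Proof. unfold dot. rewrite <- sumR_plus. apply sumR_ext. intros; ring. Qed.
Lemma dot_scal_l n t a x : dot n (fun j => t * a j) x = t * dot n a x.
Proof. unfold dot. rewrite <- sumR_scal. apply sumR_ext. intros; ring. Qed.
Lemma dot_delta n k x : (k<n)%nat -> dot n (fun j => if (j =? k)%nat then 1 else 0) x = x k.
Proof. intros. unfold dot. rewrite sumR_delta; auto. ring. Qed.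
Lemma dot_zero_r n a x : (forall j, (j<n)%nat -> x j = 0) -> dot n a x = 0.
Proof. intros H. unfold dot. rewrite (sumR_ext _ _ (fun _ => 0)); [apply sumR_zero|]. intros; rewrite H; auto; ring. Qed.

Lemma affine_vanish n m A P Q x k : Setting n m A P Q ->
  (forall l, (l<m)%nat -> Eb P Q l = true -> dot n (A l) x + k = 0) ->
  (forall j, (j<n)%nat -> x j = 0) /\ k = 0.
Proof. intros HS Hv. pose proof (convE _ _ _ _ _ HS) as HcE.
  destruct HS as [HP [HQ [HPQ [Hd [HiP [HiQ [Hext [Hnum Hn]]]]]]]].
  assert (Hall : forall y, inNew n m A y -> dot n y x + k = 0).
  { intros y Hy. destruct (HcE y Hy) as [lam [L0 [L1 [L2 L3]]]].
    rewrite (affine_eval n m A lam y x k L2 L3). rewrite (sumR_ext _ _ (fun _ => 0)); [apply sumR_zero|].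
    intros l Hl. destruct (Eb P Q l) eqn:E; [rewrite Hv; auto; ring|rewrite L1; auto; ring]. }
  destruct HiP as [eps [He Hball]].
  assert (HP0 : dot n (A P) x + k = 0) by (apply Hall; apply col_inNew; auto).
  assert (Hx : forall j, (j<n)%nat -> x j = 0).
  { intros j Hj. assert (Hy : inNew n m A (fun i => A P i + eps/2 * (if (i =? j)%nat then 1 else 0))).
    { apply Hball. intros i Hi. replace (A P i + eps / 2 * (if (i =? j)%nat then 1 else 0) - A P i)
        with (eps/2 * (if (i =? j)%nat then 1 else 0)) by ring.
      rewrite Rabs_mult, Rabs_right by lra. destruct (i =? j)%nat; [rewrite Rabs_R1|rewrite Rabs_R0]; lra. }
    specialize (Hall _ Hy). rewrite dot_plus_l, dot_scal_l, dot_delta in Hall by auto.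
    assert (eps/2 * x j = 0) by lra. apply Rmult_integral in H. destruct H; [lra|auto]. }
  split; auto. rewrite dot_zero_r in HP0; auto. lra. Qed.

Lemma dual_basis n m A P Q : Setting n m A P Q -> forall i, (i<m)%nat -> i <> P -> i <> Q ->
  exists x k, dot n (A i) x + k = 1 /\ forall l, (l<m)%nat -> l <> P -> l <> Q -> l <> i -> dot n (A l) x + k = 0.
Proof. intros HS i Hi HiP HiQ. pose proof HS as HS'.
  destruct HS as [HP [HQ [HPQ [Hd [HinP [HinQ [Hext [[p [Hpe [Hpd Hpc]]] Hn]]]]]]]].
  destruct (Hpc (A i) (Hext i Hi HiP HiQ)) as [ki [Hki Hvi]].
  destruct (homog n (S n) (fun t j => if (j <? n)%nat then p (skip ki t) j else 1) ltac:(lia)) as [z [[j1 [Hj1 Hz1]] Hz2]].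
  set (ell := fun y => dot n y z + z n).
  assert (F1 : forall k, (k < S n)%nat -> k <> ki -> dot n (p k) z + z n = 0).
  { intros k Hk Hkk. destruct (skip_surj ki k (S n) Hki Hk Hkk) as [Ht Hs].
    specialize (Hz2 (unskip ki k) ltac:(lia)). simpl in Hz2. rewrite Nat.ltb_irrefl in Hz2. rewrite Hs in Hz2.
    rewrite <- Hz2. rewrite Rmult_1_l. f_equal. unfold dot. apply sumR_ext. intros j Hj.
    rewrite (proj2 (Nat.ltb_lt _ _) Hj). auto. }
  assert (F2 : forall l, (l<m)%nat -> l <> P -> l <> Q -> l <> i -> dot n (A l) z + z n = 0).
  { intros l Hl H1 H2 H3. destruct (Hpc (A l) (Hext l Hl H1 H2)) as [k [Hk Hvl]].
    assert (k <> ki).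
    { intros ->. apply (Hd l i); auto. intros j Hj. rewrite Hvl, Hvi; auto. }
    rewrite (dot_ext n (A l) (p k)) by auto. apply F1; auto. }
  set (L := dot n (A i) z + z n).
  assert (HL : L <> 0).
  { intros HL0. destruct (affine_vanish n m A P Q z (z n) HS') as [Hx Hk].
    - intros l Hl HE. apply Eb_true in HE. destruct HE as [H1 H2].
      destruct (Nat.eq_dec l i); [subst; auto|apply F2; auto].
    - apply Hz1. destruct (Nat.eq_dec j1 n); [subst; auto|apply Hx; lia]. }
  exists (fun j => z j / L), (z n / L). split.
  - unfold dot. rewrite (sumR_ext _ _ (fun j => / L * (A i j * z j))) by (intros; unfold Rdiv; ring).
    rewrite sumR_scal. fold (dot n (A i) z). unfold L in *. field. auto.
  - intros l Hl H1 H2 H3. unfold dot. rewrite (sumR_ext _ _ (fun j => / L * (A l j * z j))) by (intros; unfold Rdiv; ring).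
    rewrite sumR_scal. fold (dot n (A l) z). unfold Rdiv. rewrite (Rmult_comm (z n)).
    rewrite <- Rmult_plus_distr_l. rewrite F2; auto. ring. Qed.

Lemma solve_sys n m A P Q : Setting n m A P Q -> forall W : nat -> R,
  exists x k, forall l, (l<m)%nat -> Eb P Q l = true -> dot n (A l) x + k = W l.
Proof. intros HS W.
  assert (H : forall i, exists xk : (nat -> R) * R, (i<m)%nat -> Eb P Q i = true ->
     dot n (A i) (fst xk) + snd xk = 1 /\ forall l, (l<m)%nat -> Eb P Q l = true -> l <> i -> dot n (A l) (fst xk) + snd xk = 0).
  { intros i. destruct (classic ((i<m)%nat /\ Eb P Q i = true)) as [[Hi HE]|C].
    - apply Eb_true in HE as [H1 H2]. destruct (dual_basis n m A P Q HS i Hi H1 H2) as [x [k [Hx1 Hx2]]].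
      exists (x, k). intros _ _. simpl. split; auto. intros l Hl HE Hli. apply Eb_true in HE as [H3 H4]. auto.
    - exists ((fun _ => 0), 0). intros Hi HE. exfalso; auto. }
  set (D := fun i => proj1_sig (constructive_indefinite_description _ (H i))).
  assert (HD : forall i, (i<m)%nat -> Eb P Q i = true ->
     dot n (A i) (fst (D i)) + snd (D i) = 1 /\ forall l, (l<m)%nat -> Eb P Q l = true -> l <> i -> dot n (A l) (fst (D i)) + snd (D i) = 0).
  { intros i. unfold D. destruct (constructive_indefinite_description _ (H i)). simpl. auto. }
  set (We := fun i => if Eb P Q i then W i else 0).
  exists (fun j => sumR m (fun i => We i * fst (D i) j)), (sumR m (fun i => We i * snd (D i))).
  intros l Hl HE. rewrite dot_comb_r. rewrite <- sumR_plus.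
  rewrite (sumR_single _ _ l Hl).
  - unfold We. rewrite HE. change (fun j => fst (D l) j) with (fst (D l)). rewrite <- Rmult_plus_distr_l. rewrite (proj1 (HD l Hl HE)). ring.
  - intros i Hi Hil. unfold We. destruct (Eb P Q i) eqn:Ei; [|ring].
    change (fun j => fst (D i) j) with (fst (D i)). rewrite <- Rmult_plus_distr_l. rewrite (proj2 (HD i Hi Ei) l Hl HE); auto. ring. Qed.

Definition RepE n m (A : nat -> nat -> R) P Q (lam y : nat -> R) : Prop :=
  (forall i, (i<m)%nat -> 0 <= lam i) /\ (forall i, (i<m)%nat -> Eb P Q i = false -> lam i = 0) /\
  sumR m lam = 1 /\ forall j, (j<n)%nat -> y j = sumR m (fun i => lam i * A i j).

Lemma ell_conv n m A P Q i x k nu w : (i<m)%nat -> Eb P Q i = true -> dot n (A i) x + k = 1 ->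
  (forall l, (l<m)%nat -> Eb P Q l = true -> l <> i -> dot n (A l) x + k = 0) ->
  RepE n m A P Q nu w -> dot n w x + k = nu i.
Proof. intros Hi HE H1 H0 [N0 [N1 [N2 N3]]]. rewrite (affine_eval n m A nu w x k N2 N3).
  rewrite (sumR_single _ _ i Hi). rewrite H1; ring.
  intros l Hl Hli. destruct (Eb P Q l) eqn:E; [rewrite H0; auto; ring|rewrite N1; auto; ring]. Qed.

Lemma bary_pos n m A P Q y lam : Setting n m A P Q -> inInterior n m A y -> RepE n m A P Q lam y ->
  forall i, (i<m)%nat -> Eb P Q i = true -> 0 < lam i.
Proof. intros HS Hint Hrep i Hi HE. pose proof HE as HE'. apply Eb_true in HE' as [H1 H2].
  destruct (dual_basis n m A P Q HS i Hi H1 H2) as [x [k [Hx1 Hx0]]].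
  assert (Hx0' : forall l, (l<m)%nat -> Eb P Q l = true -> l <> i -> dot n (A l) x + k = 0).
  { intros l Hl HEl Hli. apply Eb_true in HEl as [H3 H4]. auto. }
  assert (Hy : dot n y x + k = lam i) by (eapply ell_conv; eauto).
  destruct Hrep as [L0 [L1 [L2 L3]]] eqn:Hr.
  apply Rnot_le_lt. intros Hle. assert (lam i = 0) by (pose proof (L0 i Hi); lra).
  destruct Hint as [eps [He Hball]].
  set (s1 := sumR n (fun j => Rabs (x j))).
  assert (Hs1 : 0 <= s1) by (apply sumR_nonneg; intros; apply Rabs_pos).
  set (del := eps / (1 + s1)).
  assert (Hdel : 0 < del) by (apply Rdiv_lt_0_compat; lra).
  assert (Hz : inNew n m A (fun j => y j + (- del) * x j)).
  { apply Hball. intros j Hj. replace (y j + - del * x j - y j) with (- del * x j) by ring.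
    rewrite Rabs_mult, Rabs_Ropp, Rabs_right by lra.
    assert (Rabs (x j) <= s1) by (apply (sumR_term_le n (fun j => Rabs (x j))); auto; intros; apply Rabs_pos).
    assert (del * (1 + s1) = eps) by (unfold del; field; lra). nra. }
  destruct (convE n m A P Q HS _ Hz) as [nu Hnu].
  assert (Hzv : dot n (fun j => y j + (- del) * x j) x + k = nu i) by (eapply ell_conv; eauto).
  rewrite dot_plus_l, dot_scal_l in Hzv.
  assert (0 <= nu i) by (destruct Hnu; auto).
  assert (0 <= dot n x x) by (apply sumR_nonneg; intros; nra).
  assert (Hxx : dot n x x = 0) by nra.
  assert (Hxz : forall j, (j<n)%nat -> x j = 0) by (apply sumsq_zero; auto).
  rewrite (dot_zero_r n (A i) x Hxz) in Hx1. rewrite (dot_zero_r n y x Hxz) in Hy. lra. Qed.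

Lemma sig_at n m A P Q c lam mu x k W : (P<m)%nat -> (Q<m)%nat -> P <> Q ->
  RepE n m A P Q lam (A P) -> RepE n m A P Q mu (A Q) ->
  (forall l, (l<m)%nat -> Eb P Q l = true -> dot n (A l) x + k = W l) ->
  Sig n m A c x = exp (- k) * (sumR m (fun l => if Eb P Q l then c l * exp (W l) else 0) +
     c P * exp (sumR m (fun l => lam l * W l)) + c Q * exp (sumR m (fun l => mu l * W l))).
Proof. intros HP HQ HPQ [L0 [L1 [L2 L3]]] [M0 [M1 [M2 M3]]] HW.
  assert (Hc : forall nu, (forall i, (i<m)%nat -> Eb P Q i = false -> nu i = 0) -> sumR m nu = 1 ->
     sumR m (fun l => nu l * dot n (A l) x) = sumR m (fun l => nu l * W l) - k).
  { intros nu N1 N2. transitivity (sumR m (fun l => nu l * W l) - k * sumR m nu); [|rewrite N2; ring].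
    rewrite <- sumR_scal, <- sumR_minus. apply sumR_ext.
    intros l Hl. destruct (Eb P Q l) eqn:E; [rewrite <- HW; auto; ring|rewrite N1; auto; ring]. }
  unfold Sig. rewrite (sumR_split2 m _ P Q HP HQ HPQ).
  rewrite (dot_ext n (A P) _ x L3), (dot_ext n (A Q) _ x M3), !dot_comb_l, Hc, Hc by auto.
  rewrite (sumR_ext _ (fun l => if Eb P Q l then c l * exp (dot n (A l) x) else 0) (fun l => exp (- k) * (if Eb P Q l then c l * exp (W l) else 0))).
  - rewrite sumR_scal. unfold Rminus. rewrite !exp_plus. ring.
  - intros l Hl. destruct (Eb P Q l) eqn:E; [|ring]. rewrite <- (HW l Hl E).
    rewrite (Rmult_comm (exp (- k))), Rmult_assoc, <- exp_plus.
    replace (dot n (A l) x + k + - k) with (dot n (A l) x) by ring. ring. Qed.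

Lemma cpos n m A P Q c lam mu : Setting n m A P Q -> C_NNS n m A c -> c P < 0 -> c Q < 0 ->
  RepE n m A P Q lam (A P) -> RepE n m A P Q mu (A Q) -> (forall l, (l<m)%nat -> Eb P Q l = true -> 0 < lam l) ->
  forall i, (i<m)%nat -> Eb P Q i = true -> 0 < c i.
Proof. intros HS Hnn HcP HcQ Hl Hm Hlp i Hi HE. pose proof HS as HS'.
  destruct HS' as [HP [HQ [HPQ [Hd [HiP [HiQ [Hext [Hnum Hn]]]]]]]].
  pose proof HE as HE'. apply Eb_true in HE' as [H1 H2].
  assert (Hc0 : 0 <= c i) by (apply (ext_coef_nonneg n m A c i Hd Hi (Hext i Hi H1 H2) Hnn)).
  apply Rnot_le_lt. intros Hle. assert (Hci : c i = 0) by lra.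
  set (D := sumR m (fun l => if Eb P Q l then c l else 0)).
  assert (Hli : 0 < lam i) by auto.
  set (T := (Rabs D + 1) / (lam i * (- c P))).
  set (W := fun l => if (l =? i)%nat then T else 0).
  destruct (solve_sys n m A P Q HS W) as [x [k Hxk]].
  specialize (Hnn x). rewrite (sig_at n m A P Q c lam mu x k W HP HQ HPQ Hl Hm Hxk) in Hnn.
  assert (HS1 : sumR m (fun l => if Eb P Q l then c l * exp (W l) else 0) = D).
  { apply sumR_ext. intros l Hl'. unfold W. destruct (Eb P Q l); auto.
    destruct (Nat.eqb_spec l i); [subst; rewrite Hci; ring|rewrite exp_0; ring]. }
  assert (Hs : forall nu, sumR m (fun l => nu l * W l) = nu i * T).
  { intros nu. rewrite (sumR_single _ _ i Hi); [unfold W; rewrite Nat.eqb_refl; auto|].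
    intros l _ Hli'. unfold W. rewrite (proj2 (Nat.eqb_neq _ _) Hli'). ring. }
  rewrite HS1, !Hs in Hnn.
  assert (Hexp : 1 + lam i * T <= exp (lam i * T)) by apply exp_ineq1_le.
  assert (HT : lam i * T * (- c P) = Rabs D + 1) by (unfold T; field; lra).
  assert (c P * exp (lam i * T) <= c P * (1 + lam i * T)) by (apply Rmult_le_compat_neg_l; lra).
  assert (c Q * exp (mu i * T) < 0) by (assert (0 < exp (mu i * T)) by apply exp_pos; nra).
  assert (D <= Rabs D) by apply Rle_abs.
  assert (0 < exp (- k)) by apply exp_pos. nra. Qed.

Lemma cont_pos f x : continuity_pt f x -> 0 < f x -> exists del, 0 < del /\ forall t, Rabs (t - x) < del -> 0 < f t.
Proof. intros Hc Hf. destruct (Hc (f x) ltac:(lra)) as [alp [Ha Hal]]. exists alp. split; auto.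
  intros t Ht. destruct (Req_dec t x) as [->|Hne]; auto.
  assert (R_dist (f t) (f x) < f x). { apply Hal. split; [split; [exact I|auto]|]. simpl. unfold R_dist. auto. }
  unfold R_dist in H. pose proof (Rle_abs (f x - f t)). rewrite Rabs_minus_sym in H. lra. Qed.

Lemma ivt2 (f1 f2 : R -> R) : (forall s, 0 <= s <= 1 -> continuity_pt f1 s) ->
  (forall s, 0 <= s <= 1 -> continuity_pt f2 s) -> (forall s, 0 <= s <= 1 -> f1 s + f2 s <= 0) ->
  0 < f1 0 -> 0 < f2 1 -> exists s, 0 <= s <= 1 /\ f1 s <= 0 /\ f2 s <= 0.
Proof. intros C1 C2 Hs H0 H1.
  set (Es := fun s => 0 <= s <= 1 /\ f2 s <= 0).
  assert (E0 : Es 0). { split; [lra|]. specialize (Hs 0 ltac:(lra)). lra. }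
  assert (Hb : bound Es). { exists 1. intros s [Hs1 _]. lra. }
  destruct (completeness Es Hb (ex_intro _ 0 E0)) as [q [Hub Hlub]].
  assert (Hq0 : 0 <= q) by (apply Hub; auto).
  assert (Hq1 : q <= 1) by (apply Hlub; intros s [Hs1 _]; lra).
  assert (Hf2 : f2 q <= 0).
  { apply Rnot_lt_le. intros Hp. destruct (cont_pos f2 q (C2 q (conj Hq0 Hq1)) Hp) as [d [Hd Hdd]].
    assert (~ is_upper_bound Es (q - d/2)) by (intros Hu; specialize (Hlub _ Hu); lra).
    apply H. intros t Ht. apply Rnot_lt_le. intros Hlt. assert (t <= q) by (apply Hub; auto).
    destruct Ht as [_ Ht]. assert (0 < f2 t) by (apply Hdd; rewrite Rabs_left1; lra). lra. }
  assert (Hq1r : q < 1). { destruct Hq1 as [Hlt|Heq]; auto. subst q. lra. }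
  exists q. split; [lra|split; auto].
  apply Rnot_lt_le. intros Hp. destruct (cont_pos f1 q (C1 q (conj Hq0 Hq1)) Hp) as [d [Hd Hdd]].
  set (t := q + Rmin (d/2) (1 - q)).
  assert (Ht1 : q < t). { unfold t. apply Rmin_case; lra. }
  assert (Ht2 : t <= 1). { unfold t. pose proof (Rmin_r (d/2) (1-q)). lra. }
  assert (Ht3 : Rabs (t - q) < d). { rewrite Rabs_right by lra. unfold t. pose proof (Rmin_l (d/2) (1-q)). lra. }
  assert (0 < f1 t) by auto.
  assert (Es t). { split; [lra|]. specialize (Hs t ltac:(lra)). lra. }
  assert (t <= q) by (apply Hub; auto). lra. Qed.

Lemma cont_sum m (F : nat -> R -> R) s : (forall l, (l<m)%nat -> continuity_pt (F l) s) ->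
  continuity_pt (fun s => sumR m (fun l => F l s)) s.
Proof. induction m; intros H; simpl.
  - apply continuity_pt_const. intros a b. auto.
  - change (continuity_pt ((fun s => sumR m (fun l => F l s)) + F m)%F s).
    apply continuity_pt_plus; [apply IHm; intros; apply H; lia|apply H; lia]. Qed.

Definition Gf m (w lam mu c : nat -> R) (s : R) : R :=
  exp (sumR m (fun l => w l * ln ((lam l * s + mu l * (1 - s)) / c l))).

Lemma Gf_cont m w lam mu c s : 0 <= s <= 1 ->
  (forall l, (l<m)%nat -> w l = 0 \/ (0 < lam l /\ 0 < mu l /\ 0 < c l)) -> continuity_pt (Gf m w lam mu c) s.
Proof. intros Hs H. unfold Gf.
  change (continuity_pt (comp exp (fun s => sumR m (fun l => w l * ln ((lam l * s + mu l * (1 - s)) / c l)))) s).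
  apply continuity_pt_comp; [|apply derivable_continuous_pt; exists (exp (sumR m (fun l => w l * ln ((lam l * s + mu l * (1 - s)) / c l)))); apply derivable_pt_lim_exp].
  apply cont_sum. intros l Hl. destruct (H l Hl) as [H0|[H1 [H2 H3]]].
  - apply (continuity_pt_locally_ext (fun _ => 0) _ 1); [lra| |apply continuity_pt_const; intros a b; auto].
    intros y _. rewrite H0. ring.
  - change (continuity_pt (mult_real_fct (w l) (comp ln (fun s => (lam l * s + mu l * (1 - s)) / c l))) s).
    apply continuity_pt_scal. apply continuity_pt_comp; [reg; lra|].
    apply derivable_continuous_pt. exists (/ ((lam l * s + mu l * (1 - s)) / c l)). apply derivable_pt_lim_ln.
    apply Rdiv_lt_0_compat; [nra|auto]. Qed.

Lemma rep_dot n m A P Q lam x k W : RepE n m A P Q lam (A P) ->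
  (forall l, (l<m)%nat -> Eb P Q l = true -> dot n (A l) x + k = W l) ->
  dot n (A P) x = sumR m (fun l => lam l * W l) - k.
Proof. intros [L0 [L1 [L2 L3]]] HW. rewrite (dot_ext n (A P) _ x L3), dot_comb_l.
  transitivity (sumR m (fun l => lam l * W l) - k * sumR m lam); [|rewrite L2; ring].
  rewrite <- sumR_scal, <- sumR_minus. apply sumR_ext.
  intros l Hl. destruct (Eb P Q l) eqn:E; [rewrite <- HW; auto; ring|rewrite L1; auto; ring]. Qed.

Lemma RepE_swap n m A P Q lam y : RepE n m A P Q lam y -> RepE n m A Q P lam y.
Proof. intros [L0 [L1 [L2 L3]]]. repeat split; auto. intros i Hi E. rewrite EbC in E. auto. Qed.

Lemma age_cert n m A P Q cc lam d xs : (P<m)%nat -> (Q<m)%nat -> P <> Q -> RepE n m A P Q lam (A P) ->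
  0 < d -> cc P = - d -> cc Q = 0 ->
  (forall l, (l<m)%nat -> Eb P Q l = true -> lam l * d * exp (dot n (A P) xs) * exp (- dot n (A l) xs) <= cc l) ->
  C_AGE n m A P cc.
Proof. intros HP HQ HPQ Hrep Hd HcP HcQ Hl. pose proof Hrep as [L0 [L1 [L2 L3]]]. split.
  - intros x. unfold Sig. rewrite (sumR_split2 m _ P Q HP HQ HPQ). rewrite HcP, HcQ.
    apply Rle_trans with (- d * exp (dot n (A P) x) + 0 * exp (dot n (A Q) x) +
       sumR m (fun l => d * exp (dot n (A P) xs) * (lam l * exp (dot n (A l) x - dot n (A l) xs)))).
    + rewrite sumR_scal.
      assert (exp (sumR m (fun l => lam l * (dot n (A l) x - dot n (A l) xs))) <= sumR m (fun l => lam l * exp (dot n (A l) x - dot n (A l) xs))) by (apply jensen; auto).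
      assert (sumR m (fun l => lam l * (dot n (A l) x - dot n (A l) xs)) = dot n (A P) x - dot n (A P) xs).
      { rewrite (dot_ext n (A P) _ x L3), (dot_ext n (A P) _ xs L3), !dot_comb_l, <- sumR_minus.
        apply sumR_ext. intros; ring. }
      rewrite H0 in H. unfold Rminus at 1 in H. rewrite exp_plus, exp_Ropp in H.
      assert (0 < exp (dot n (A P) xs)) by apply exp_pos.
      assert (exp (dot n (A P) x) <= exp (dot n (A P) xs) * sumR m (fun l => lam l * exp (dot n (A l) x - dot n (A l) xs))).
      { apply (Rmult_le_compat_l (exp (dot n (A P) xs))) in H; [|lra].
        rewrite <- Rmult_assoc, (Rmult_comm _ (exp (dot n (A P) x))), Rmult_assoc, Rinv_r, Rmult_1_r in H by lra. auto. }
      nra.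
    + apply Rplus_le_compat_l. apply sumR_le. intros l Hl'. destruct (Eb P Q l) eqn:E.
      * specialize (Hl l Hl' E). unfold Rminus. rewrite exp_plus.
        assert (0 < exp (dot n (A l) x)) by apply exp_pos.
        apply (Rmult_le_compat_r (exp (dot n (A l) x))) in Hl; [|lra]. nra.
      * rewrite L1 by auto. lra.
  - intros i Hi HiP. destruct (Nat.eq_dec i Q); [subst; lra|].
    assert (E : Eb P Q i = true) by (apply Eb_true; auto).
    eapply Rle_trans; [|apply (Hl i Hi E)].
    assert (0 <= lam i) by auto. pose proof (exp_pos (dot n (A P) xs)). pose proof (exp_pos (- dot n (A i) xs)).
    apply Rmult_le_pos; [|lra]. apply Rmult_le_pos; [|lra]. nra. Qed.

Lemma hard_case n m A P Q c : Setting n m A P Q -> C_NNS n m A c -> c P < 0 -> c Q < 0 -> C_SAGE n m A c.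
Proof. intros HS Hnn HcP HcQ. pose proof HS as HS'.
  destruct HS' as [HP [HQ [HPQ [Hd [HiP [HiQ [Hext [Hnum Hn]]]]]]]].
  destruct (convE n m A P Q HS (A P) (col_inNew n m A P HP)) as [lam Hlam].
  destruct (convE n m A P Q HS (A Q) (col_inNew n m A Q HQ)) as [mu Hmu].
  change (RepE n m A P Q lam (A P)) in Hlam. change (RepE n m A P Q mu (A Q)) in Hmu.
  assert (Hlp : forall l, (l<m)%nat -> Eb P Q l = true -> 0 < lam l) by (apply (bary_pos n m A P Q (A P)); auto).
  assert (Hmp : forall l, (l<m)%nat -> Eb P Q l = true -> 0 < mu l) by (apply (bary_pos n m A P Q (A Q)); auto).
  assert (Hcp : forall l, (l<m)%nat -> Eb P Q l = true -> 0 < c l) by (apply (cpos n m A P Q c lam mu); auto).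
  pose proof Hlam as [L0 [L1 [L2 L3]]]. pose proof Hmu as [M0 [M1 [M2 M3]]].
  set (d1 := - c P). set (d2 := - c Q).
  set (h := fun l s => lam l * s + mu l * (1 - s)).
  set (Wf := fun s l => ln ((lam l * s + mu l * (1 - s)) / c l)).
  set (G1 := Gf m lam lam mu c). set (G2 := Gf m mu lam mu c).
  assert (HG1 : forall s, G1 s = exp (sumR m (fun l => lam l * Wf s l))) by reflexivity.
  assert (HG2 : forall s, G2 s = exp (sumR m (fun l => mu l * Wf s l))) by reflexivity.
  assert (Hhpos : forall l s, (l<m)%nat -> Eb P Q l = true -> 0 <= s <= 1 -> 0 < h l s).
  { intros l s Hl E Hs. unfold h. specialize (Hlp l Hl E). specialize (Hmp l Hl E). nra. }
  assert (Hexpl : forall s x k, 0 <= s <= 1 -> (forall l, (l<m)%nat -> Eb P Q l = true -> dot n (A l) x + k = Wf s l) ->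
     forall l, (l<m)%nat -> Eb P Q l = true -> c l * exp (dot n (A l) x) = exp (- k) * h l s).
  { intros s x k Hs Hx l Hl E. replace (dot n (A l) x) with (Wf s l + - k) by (rewrite <- (Hx l Hl E); ring).
    rewrite exp_plus. unfold Wf. rewrite exp_ln.
    - unfold h. field. specialize (Hcp l Hl E). lra.
    - apply Rdiv_lt_0_compat; [apply (Hhpos l s Hl E Hs)|auto]. }
  assert (Hsumh : forall s, sumR m (fun l => if Eb P Q l then h l s else 0) = 1).
  { intros s. transitivity (s * sumR m lam + (1 - s) * sumR m mu); [|rewrite L2, M2; ring].
    rewrite <- !sumR_scal, <- sumR_plus. apply sumR_ext. intros l Hl. unfold h.
    destruct (Eb P Q l) eqn:E; [ring|rewrite L1, M1 by auto; ring]. }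
  assert (Hkey : forall s, 0 <= s <= 1 -> (d1 * G1 s - s) + (d2 * G2 s - (1 - s)) <= 0).
  { intros s Hs. destruct (solve_sys n m A P Q HS (Wf s)) as [x [k Hx]].
    specialize (Hnn x). rewrite (sig_at n m A P Q c lam mu x k (Wf s) HP HQ HPQ Hlam Hmu Hx) in Hnn.
    rewrite <- HG1, <- HG2 in Hnn.
    rewrite (sumR_ext _ _ (fun l => if Eb P Q l then h l s else 0)) in Hnn.
    2:{ intros l Hl. destruct (Eb P Q l) eqn:E; [|ring]. unfold Wf. rewrite exp_ln; [unfold h; field; specialize (Hcp l Hl E); lra|].
        apply Rdiv_lt_0_compat; [apply (Hhpos l s Hl E Hs)|auto]. }
    rewrite Hsumh in Hnn. pose proof (exp_pos (- k)).
    unfold d1, d2. nra. }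
  assert (Hcontw : forall w, (forall l, (l<m)%nat -> Eb P Q l = false -> w l = 0) ->
     forall l, (l<m)%nat -> w l = 0 \/ (0 < lam l /\ 0 < mu l /\ 0 < c l)).
  { intros w Hw l Hl. destruct (Eb P Q l) eqn:E; [right; auto|left; auto]. }
  destruct (ivt2 (fun s => d1 * G1 s - s) (fun s => d2 * G2 s - (1 - s))) as [s [Hs [Hs1 Hs2]]].
  - intros s Hs. change (continuity_pt (mult_real_fct d1 G1 - id)%F s).
    apply continuity_pt_minus; [apply continuity_pt_scal; apply Gf_cont; auto|].
    apply derivable_continuous_pt. apply derivable_pt_id.
  - intros s Hs. change (continuity_pt (mult_real_fct d2 G2 - (fct_cte 1 - id))%F s).
    apply continuity_pt_minus; [apply continuity_pt_scal; apply Gf_cont; auto|].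
    apply derivable_continuous_pt. apply derivable_pt_minus; [apply derivable_pt_const|apply derivable_pt_id].
  - auto.
  - unfold G1, Gf. pose proof (exp_pos (sumR m (fun l => lam l * ln ((lam l * 0 + mu l * (1 - 0)) / c l)))).
    unfold d1. nra.
  - unfold G2, Gf. pose proof (exp_pos (sumR m (fun l => mu l * ln ((lam l * 1 + mu l * (1 - 1)) / c l)))).
    unfold d2. nra.
  -
    destruct (solve_sys n m A P Q HS (Wf s)) as [xs [ks Hxs]].
    assert (EP : exp (dot n (A P) xs) = exp (- ks) * G1 s).
    { rewrite (rep_dot n m A P Q lam xs ks (Wf s) Hlam Hxs), HG1. unfold Rminus. rewrite exp_plus. ring. }
    assert (EQ : exp (dot n (A Q) xs) = exp (- ks) * G2 s).
    { rewrite (rep_dot n m A Q P mu xs ks (Wf s) (RepE_swap _ _ _ _ _ _ _ Hmu)), HG2.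
      - unfold Rminus. rewrite exp_plus. ring.
      - intros l Hl E. rewrite EbC in E. auto. }
    assert (EA := Hexpl s xs ks Hs Hxs).
    set (K1 := d1 * exp (dot n (A P) xs)). set (K2 := d2 * exp (dot n (A Q) xs)).
    set (cs1 := fun l => if (l =? P)%nat then c P else if Eb P Q l then lam l * K1 * exp (- dot n (A l) xs) else 0).
    set (cs2 := fun l => if (l =? Q)%nat then c Q else if Eb P Q l then c l - lam l * K1 * exp (- dot n (A l) xs) else 0).
    assert (Hineq : forall l, (l<m)%nat -> Eb P Q l = true ->
       mu l * K2 * exp (- dot n (A l) xs) <= c l - lam l * K1 * exp (- dot n (A l) xs)).
    { intros l Hl E. specialize (EA l Hl E).
      assert (Hk : lam l * K1 + mu l * K2 <= c l * exp (dot n (A l) xs)).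
      { rewrite EA. unfold K1, K2. rewrite EP, EQ. unfold h.
        pose proof (exp_pos (- ks)). specialize (Hlp l Hl E). specialize (Hmp l Hl E).
        assert (lam l * (d1 * G1 s) <= lam l * s) by (apply Rmult_le_compat_l; lra).
        assert (mu l * (d2 * G2 s) <= mu l * (1 - s)) by (apply Rmult_le_compat_l; lra).
        nra. }
      pose proof (exp_pos (- dot n (A l) xs)).
      apply (Rmult_le_compat_r (exp (- dot n (A l) xs))) in Hk; [|lra].
      rewrite Rmult_assoc, <- exp_plus, Rplus_opp_r, exp_0 in Hk. nra. }
    exists (fun k => if (k =? P)%nat then cs1 else if (k =? Q)%nat then cs2 else (fun _ => 0)). split.
    + intros k Hk. destruct (Nat.eqb_spec k P).
      * subst k. apply (age_cert n m A P Q cs1 lam d1 xs HP HQ HPQ Hlam).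
        -- unfold d1; lra.
        -- unfold cs1. rewrite Nat.eqb_refl. unfold d1. ring.
        -- unfold cs1. rewrite (proj2 (Nat.eqb_neq _ _) (not_eq_sym HPQ)). unfold Eb. rewrite Nat.eqb_refl. rewrite andb_false_r. auto.
        -- intros l Hl E. unfold cs1. assert (l <> P) by (apply Eb_true in E; tauto).
           rewrite (proj2 (Nat.eqb_neq _ _) H), E. unfold K1. lra.
      * destruct (Nat.eqb_spec k Q).
        -- subst k. apply (age_cert n m A Q P cs2 mu d2 xs HQ HP (not_eq_sym HPQ) (RepE_swap _ _ _ _ _ _ _ Hmu)).
           ++ unfold d2; lra.
           ++ unfold cs2. rewrite Nat.eqb_refl. unfold d2. ring.
           ++ unfold cs2. rewrite (proj2 (Nat.eqb_neq _ _) HPQ). unfold Eb. rewrite Nat.eqb_refl. auto.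
           ++ intros l Hl E. rewrite EbC in E. unfold cs2. assert (l <> Q) by (apply Eb_true in E; tauto).
              rewrite (proj2 (Nat.eqb_neq _ _) H), E. specialize (Hineq l Hl E). unfold K2 in Hineq. lra.
        -- split; [apply zero_NNS|intros; lra].
    + intros i Hi. rewrite (sumR_split2 m _ P Q HP HQ HPQ). rewrite Nat.eqb_refl.
      rewrite (proj2 (Nat.eqb_neq _ _) (not_eq_sym HPQ)), Nat.eqb_refl.
      rewrite (sumR_ext _ _ (fun _ => 0)).
      2:{ intros k Hk. destruct (Eb P Q k) eqn:E; auto. apply Eb_true in E as [H1 H2].
          rewrite (proj2 (Nat.eqb_neq _ _) H1), (proj2 (Nat.eqb_neq _ _) H2). auto. }
      rewrite sumR_zero. unfold cs1, cs2.
      destruct (Nat.eqb_spec i P).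
      * subst i. rewrite (proj2 (Nat.eqb_neq _ _) HPQ). unfold Eb. rewrite Nat.eqb_refl. simpl. ring.
      * destruct (Nat.eqb_spec i Q).
        -- subst i. unfold Eb. rewrite Nat.eqb_refl, andb_false_r. ring.
        -- assert (E : Eb P Q i = true) by (apply Eb_true; auto). rewrite E. ring.
Qed.

Theorem mainTheorem18 (n m : nat) (A : nat -> nat -> R) :
  distinct_columns n m A ->
  full_dimensional n m A ->
  (forall i, (i < m)%nat -> isExtreme n m A (A i) \/ inInterior n m A (A i)) ->
  ( (forall i k, (i < m)%nat -> (k < m)%nat ->
        inInterior n m A (A i) -> inInterior n m A (A k) -> i = k)
    \/
    (num_extreme_points n m A (S n) /\
     forall i j k, (i < m)%nat -> (j < m)%nat -> (k < m)%nat ->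
        inInterior n m A (A i) -> inInterior n m A (A j) -> inInterior n m A (A k) ->
        i = j \/ j = k \/ i = k) ) ->
  forall c : nat -> R, C_SAGE n m A c <-> C_NNS n m A c.
Proof.
  intros Hd Hfull Hcol Hcase c. split; [apply sage_nns|]. intros Hnn.
  destruct (classic (exists P Q, (P<m)%nat /\ (Q<m)%nat /\ P <> Q /\ c P < 0 /\ c Q < 0)) as [[P [Q [HP [HQ [HPQ [HcP HcQ]]]]]]|Hno].
  - assert (HiP : inInterior n m A (A P)).
    { destruct (Hcol P HP) as [He|Hi]; auto. pose proof (ext_coef_nonneg n m A c P Hd HP He Hnn). lra. }
    assert (HiQ : inInterior n m A (A Q)).
    { destruct (Hcol Q HQ) as [He|Hi]; auto. pose proof (ext_coef_nonneg n m A c Q Hd HQ He Hnn). lra. }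
    destruct Hcase as [H1|[Hnum H3]].
    + exfalso. apply HPQ. auto.
    + assert (Hn : (1 <= n)%nat).
      { destruct n; [|lia]. exfalso. apply (Hd P Q HP HQ HPQ). intros j Hj. lia. }
      apply (hard_case n m A P Q c); auto.
      refine (conj HP (conj HQ (conj HPQ (conj Hd (conj HiP (conj HiQ (conj _ (conj Hnum Hn)))))))).
      intros l0 Hl HlP HlQ. destruct (Hcol l0 Hl) as [He|Hi]; auto.
      exfalso. destruct (H3 P Q l0 HP HQ Hl HiP HiQ Hi) as [E|[E|E]]; auto.
  - apply one_neg; auto. intros i j Hi Hj Hci Hcj. apply NNPP. intros Hij. apply Hno. exists i, j. auto.
Qed.
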